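(* For all $y\in\{0,1\}^n$ with $y\ne0^n$ and all integers $r\ge0$, on the $\ell$-boson subspace, $$\|\tilde G_y\cdot\mathsf{Con}_r\|_{\mathrm{op}}\le\sqrt r+\sqrt{2+4r},\qquad\|\tilde H_y\cdot\mathsf{Con}_r\|_{\mathrm{op}}\le9r+9.$$
   Context: Bosonic setting with $2^n$ modes indexed by $\{0,1\}^n$: position operators $\hat a_x,\hat a_x^\dagger$ (standard bosonic commutation relations), vacuum $|\mathrm{vac}\rangle$, momentum operators $\tilde a_y=2^{-n/2}\sum_x(-1)^{x\cdot y}\hat a_x$ and $\tilde a_y^\dagger$ likewise, momentum Fock states $|u\rangle=\prod_y(\tilde a_y^\dagger)^{u_y}(u_y!)^{-1/2}|\mathrm{vac}\rangle$. We work in the subspace of exactly $\ell$ bosons. $\tilde G_y=\frac1{\sqrt\ell}\sum_x\tilde a^\dagger_{x\oplus y}\tilde a_x$ and $\tilde H_y=\frac1\ell\sum_{x,x'}\tilde a^\dagger_{x\oplus y}\tilde a^\dagger_{x'\oplus y}\tilde a_x\tilde a_{x'}$. $\mathsf{Con}_r$ is the projector onto the span of momentum Fock states $|u\rangle$ with $\sum_yu_y=\ell$ and $u_{0^n}\ge\ell-r$ ($r$-condensates). *)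

(* Defs.v *)
(* Bosons on 2^n modes, worked out in the momentum Fock basis. *)
From HB Require Import structures.
From mathcomp Require Import all_boot all_order all_algebra.
Set Implicit Arguments. Unset Strict Implicit. Unset Printing Implicit Defensive.
Import Order.TTheory GRing.Theory Num.Theory.
Local Open Scope ring_scope.

Definition bits (n : nat) := {ffun 'I_n -> bool}.
Definition bxor n (x y : bits n) : bits n := [ffun i => x i (+) y i].
Definition bzero n : bits n := [ffun _ => false].

Definition occ (n : nat) := {ffun bits n -> nat}.
Definition occ_inc n (u : occ n) (x : bits n) : occ n :=
  [ffun z => (u z + (z == x))%N].
Definition occ_dec n (u : occ n) (x : bits n) : occ n :=
  [ffun z => (u z - (z == x))%N].
(* occupation vectors of total l, enumerated through a finite type *)
Definition occ_of n l (u : {ffun bits n -> 'I_l.+1}) : occ n :=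
  [ffun z => nat_of_ord (u z)].
Definition total_is n l (u : {ffun bits n -> 'I_l.+1}) : bool :=
  (\sum_(z : bits n) nat_of_ord (u z) == l)%N.

Section Fock.
Variable C : numClosedFieldType.
Variable n : nat.

(* a state psi = sum_u psi(u) |u>, |u> the momentum Fock states *)
Definition state := occ n -> C.

(* momentum annihilation / creation operators on coefficient functions:
   at|u> = sqrt(u_x)|u - e_x>,  at^dag|u> = sqrt(u_x+1)|u + e_x> *)
Definition ann (x : bits n) (psi : state) : state :=
  fun w => sqrtC ((w x).+1)%:R * psi (occ_inc w x).
Definition cre (x : bits n) (psi : state) : state :=
  fun u => sqrtC (u x)%:R * psi (occ_dec u x).

Definition Gt (l : nat) (y : bits n) (psi : state) : state :=
  fun u => (sqrtC l%:R)^-1 *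
    \sum_(x : bits n) cre (bxor x y) (ann x psi) u.
Definition Ht (l : nat) (y : bits n) (psi : state) : state :=
  fun u => (l%:R)^-1 *
    \sum_(x : bits n) \sum_(x' : bits n)
      cre (bxor x y) (cre (bxor x' y) (ann x (ann x' psi))) u.

Definition Con (l r : nat) (psi : state) : state :=
  fun u => if (l - r <= u (bzero n))%N then psi u else 0.

Definition lnorm (l : nat) (psi : state) : C :=
  sqrtC (\sum_(u : {ffun bits n -> 'I_l.+1} | total_is u) `|psi (occ_of u)| ^+ 2).

Definition opnorm_le (l : nat) (A : state -> state) (c : C) : Prop :=
  forall psi : state, lnorm l (A psi) <= c * lnorm l psi.
End Fock.

(* Main.v *)
Require Import Defs.
From HB Require Import structures.
From mathcomp Require Import all_boot all_order all_algebra.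
From mathcomp Require Import zify ring.
From Stdlib Require Import FunctionalExtensionality.
Import Order.TTheory GRing.Theory Num.Theory.
Local Open Scope ring_scope.
Set Implicit Arguments. Unset Strict Implicit. Unset Printing Implicit Defensive.

Section Real.
Variable C : numClosedFieldType.

Lemma amgm2 (a b : C) : a \is Num.real -> b \is Num.real ->
  a * b *+ 2 <= a ^+ 2 + b ^+ 2.
Proof.
move=> ra rb; rewrite -subr_ge0.
have -> : a ^+ 2 + b ^+ 2 - a * b *+ 2 = (a - b) ^+ 2 by ring.
by rewrite -realEsqr rpredB.
Qed.

Lemma sqrtC_nat_ge0 (m : nat) : 0 <= sqrtC (m%:R : C).
Proof. by rewrite sqrtC_ge0 ler0n. Qed.

Lemma sqrtC_nat_le (a b : nat) : (a <= b)%N -> sqrtC (a%:R : C) <= sqrtC b%:R.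
Proof. by move=> h; rewrite ler_sqrtC ?ler_nat // qualifE /= ler0n. Qed.

Lemma sqrtC_sq (x : C) : sqrtC x * sqrtC x = x.
Proof. by rewrite -expr2 sqrtCK. Qed.

Lemma sqrt_le_of_sq (x y : C) : 0 <= x -> 0 <= y -> x ^+ 2 <= y -> x <= sqrtC y.
Proof.
move=> x0 y0 h; rewrite -(sqrCK x0) ler_sqrtC // qualifE /=.
  by rewrite exprn_ge0.
Qed.

Lemma sqrtC_nat_mul_le (m : nat) (a b : nat) :
  (m <= a)%N -> (m <= b)%N -> (m%:R : C) <= sqrtC a%:R * sqrtC b%:R.
Proof.
move=> ha hb; rewrite -{1}(sqrtC_sq (m%:R)).
by apply: ler_pM; rewrite ?sqrtC_nat_ge0 ?sqrtC_nat_le.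
Qed.

Lemma sqrt_le (x N : C) : 0 <= x -> 0 <= N -> N <= x ^+ 2 -> sqrtC N <= x.
Proof.
move=> x0 N0 h; rewrite -(sqrCK x0) ler_sqrtC // qualifE /=.
by rewrite exprn_ge0.
Qed.

Lemma cauchy_schwarz (I : finType) (P : pred I) (p q : I -> C) :
  (forall i, p i \is Num.real) -> (forall i, q i \is Num.real) ->
  (\sum_(i | P i) p i * q i) ^+ 2 <=
  (\sum_(i | P i) p i ^+ 2) * (\sum_(i | P i) q i ^+ 2).
Proof.
move=> rp rq.
have e1 : (\sum_(i | P i) p i * q i) ^+ 2 =
  \sum_(i | P i) \sum_(j | P j) (p i * q j) * (p j * q i).
  rewrite expr2 big_distrl /=; apply: eq_bigr => i _.
  rewrite big_distrr /=; apply: eq_bigr => j _; ring.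
have e2 : (\sum_(i | P i) p i ^+ 2) * (\sum_(i | P i) q i ^+ 2) =
  \sum_(i | P i) \sum_(j | P j) (p i * q j) ^+ 2.
  rewrite big_distrl /=; apply: eq_bigr => i _.
  rewrite big_distrr /=; apply: eq_bigr => j _; ring.
have e3 : \sum_(i | P i) \sum_(j | P j) (p i * q j) ^+ 2 =
  \sum_(i | P i) \sum_(j | P j) (p j * q i) ^+ 2.
  by rewrite exchange_big.
rewrite e1 e2 -(ler_pMn2r (n:=2)) //.
have -> : (\sum_(i | P i) \sum_(j | P j) (p i * q j) ^+ 2) *+ 2 =
  \sum_(i | P i) \sum_(j | P j) ((p i * q j) ^+ 2 + (p j * q i) ^+ 2).
  rewrite mulr2n {2}e3 -big_split /=; apply: eq_bigr => i _.
  by rewrite -big_split.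
rewrite -sumrMnl; apply: ler_sum => i _; rewrite -sumrMnl.
by apply: ler_sum => j _; apply: amgm2; rewrite rpredM.
Qed.

End Real.

Section Occ.
Variable n : nat.

Definition tot (w : occ n) : nat := (\sum_z w z)%N.

Lemma occ_incE (w : occ n) x z : occ_inc w x z = (w z + (z == x))%N.
Proof. by rewrite ffunE. Qed.
Lemma occ_decE (w : occ n) x z : occ_dec w x z = (w z - (z == x))%N.
Proof. by rewrite ffunE. Qed.

Lemma tot_inc (w : occ n) x : tot (occ_inc w x) = (tot w).+1.
Proof.
rewrite /tot (bigD1 x) //= [X in _ = X.+1](bigD1 x) //= occ_incE eqxx.
rewrite addn1 addSn; congr (_ + _)%N.+1; apply: eq_bigr => z /negbTE zx.
by rewrite occ_incE zx addn0.
Qed.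

Lemma tot_dec (w : occ n) x : (0 < w x)%N -> tot (occ_dec w x) = (tot w).-1.
Proof.
move=> h; rewrite /tot (bigD1 x) //= [in RHS](bigD1 x) //= occ_decE eqxx.
have -> : (\sum_(i | i != x) occ_dec w x i = \sum_(i | i != x) w i)%N.
  by apply: eq_bigr => z /negbTE zx; rewrite occ_decE zx subn0.
rewrite /=; lia.
Qed.

Lemma le_tot (w : occ n) z : (w z <= tot w)%N.
Proof. by rewrite /tot (bigD1 z) //= leq_addr. Qed.

Variable l : nat.
Local Notation cfg := {ffun bits n -> 'I_l.+1}.

Lemma tot_occ_of (u : {ffun bits n -> 'I_l.+1}) : total_is u -> tot (occ_of u) = l.
Proof.
rewrite /total_is /tot => /eqP h; rewrite -[RHS]h; apply: eq_bigr => z _; by rewrite ffunE.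
Qed.

Lemma occ_of_inj : injective (@occ_of n l).
Proof.
move=> u v /ffunP h; apply/ffunP => z; apply: val_inj; move: (h z).
by rewrite !ffunE.
Qed.

Section Sums.
Variable C : numClosedFieldType.

Lemma sum_occ (F : occ n -> C) (w : occ n) : tot w = l ->
  \sum_(u : cfg | total_is u) (if occ_of u == w then F (occ_of u) else 0) = F w.
Proof.
move=> hw.
have hz : forall z, (w z < l.+1)%N by move=> z; rewrite ltnS -hw le_tot.
pose u0 : {ffun bits n -> 'I_l.+1} := [ffun z => Ordinal (hz z)].
have e0 : occ_of u0 = w by apply/ffunP => z; rewrite !ffunE.
have t0 : total_is u0.
  rewrite /total_is; apply/eqP; rewrite -[RHS]hw /tot.
  by apply/eq_bigr => z _; rewrite ffunE.
rewrite (bigD1 u0) //= e0 eqxx big1 ?addr0 // => u /andP [_ hu].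
case: eqP => // h; case/eqP: hu; apply: occ_of_inj; by rewrite h e0.
Qed.

Lemma sum_reindex (g g' : occ n -> occ n) (P Q : pred (occ n))
  (H : occ n -> occ n -> C) :
  (forall u, tot u = l -> P u -> tot (g u) = l) ->
  (forall v, tot v = l -> Q v -> tot (g' v) = l) ->
  (forall u v, ((v == g u) && P u) = ((u == g' v) && Q v)) ->
  \sum_(u : cfg | total_is u) (if P (occ_of u) then H (occ_of u) (g (occ_of u)) else 0)
  = \sum_(v : cfg | total_is v) (if Q (occ_of v) then H (g' (occ_of v)) (occ_of v) else 0).
Proof.
move=> h1 h2 h3.
transitivity (\sum_(u : cfg | total_is u) \sum_(v : cfg | total_is v)
   (if (occ_of v == g (occ_of u)) && P (occ_of u) then H (occ_of u) (occ_of v) else 0)).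
  apply: eq_bigr => u tu; case: ifP => Pu.
    rewrite -(sum_occ (fun v => H (occ_of u) v) (h1 _ (tot_occ_of tu) Pu)).
    by apply: eq_bigr => v _; rewrite andbT.
  by rewrite big1 // => v _; rewrite andbF.
rewrite exchange_big /=; apply: eq_bigr => v tv.
case: ifP => Qv.
  rewrite -(sum_occ (fun u => H u (occ_of v)) (h2 _ (tot_occ_of tv) Qv)).
  by apply: eq_bigr => u _; rewrite h3 Qv andbT.
by rewrite big1 // => u _; rewrite h3 Qv andbF.
Qed.


Definition Nsq (psi : state C n) : C :=
  \sum_(u : cfg | total_is u) `|psi (occ_of u)| ^+ 2.

Lemma Nsq_ge0 (psi : state C n) : 0 <= Nsq psi.
Proof. by apply: sumr_ge0 => u _; rewrite exprn_ge0. Qed.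

Lemma lnormE (psi : state C n) : lnorm l psi = sqrtC (Nsq psi).
Proof. by []. Qed.

Lemma lnorm_ge0 (psi : state C n) : 0 <= lnorm l psi.
Proof. by rewrite lnormE sqrtC_ge0 Nsq_ge0. Qed.

Lemma Nsq_ext (f g : state C n) : (forall w, tot w = l -> f w = g w) -> Nsq f = Nsq g.
Proof. by move=> h; apply: eq_bigr => u tu; rewrite h // tot_occ_of. Qed.

Lemma lnorm_ext (f g : state C n) : (forall w, tot w = l -> f w = g w) ->
  lnorm l f = lnorm l g.
Proof. by move=> h; rewrite !lnormE (Nsq_ext h). Qed.

Lemma lnorm_le_of_Nsq (f g : state C n) (k : C) : 0 <= k ->
  Nsq f <= k ^+ 2 * Nsq g -> lnorm l f <= k * lnorm l g.
Proof.
move=> k0 h; rewrite !lnormE -(sqrCK k0) -sqrtCM ?qualifE /= ?exprn_ge0 ?Nsq_ge0 //.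
by rewrite ler_sqrtC // qualifE /= ?mulr_ge0 ?exprn_ge0 ?Nsq_ge0.
Qed.

Lemma Nsq_scale (c : C) (f : state C n) : Nsq (fun w => c * f w) = `|c| ^+ 2 * Nsq f.
Proof. rewrite /Nsq mulr_sumr; apply: eq_bigr => u _; by rewrite normrM exprMn. Qed.

Lemma lnorm_tri (h f g : state C n) :
  (forall w, tot w = l -> `|h w| <= `|f w| + `|g w|) ->
  lnorm l h <= lnorm l f + lnorm l g.
Proof.
move=> hw; rewrite [X in X <= _]lnormE; apply: sqrt_le.
- by rewrite addr_ge0 ?lnorm_ge0.
- by rewrite Nsq_ge0.
have cs : \sum_(u : cfg | total_is u) `|f (occ_of u)| * `|g (occ_of u)| <=
          lnorm l f * lnorm l g.
  set S := \sum_(u : cfg | total_is u) _.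
  have S0 : 0 <= S by apply: sumr_ge0 => u _; rewrite mulr_ge0.
  rewrite -(sqrCK S0) !lnormE -sqrtCM ?qualifE /= ?Nsq_ge0 //.
  rewrite ler_sqrtC ?qualifE /= ?exprn_ge0 ?mulr_ge0 ?Nsq_ge0 //.
  by apply: cauchy_schwarz => u; rewrite ger0_real.
have step1 : Nsq h <= \sum_(u : cfg | total_is u) (`|f (occ_of u)| + `|g (occ_of u)|) ^+ 2.
  rewrite /Nsq; apply: ler_sum => u tu; rewrite !expr2.
  by apply: ler_pM => //; rewrite ?hw ?tot_occ_of.
apply: (le_trans step1).
have -> : (lnorm l f + lnorm l g) ^+ 2 =
   lnorm l f ^+ 2 + lnorm l g ^+ 2 + (lnorm l f * lnorm l g) *+ 2 by ring.
rewrite !lnormE !sqrtCK -!lnormE.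
have -> : \sum_(u : cfg | total_is u) (`|f (occ_of u)| + `|g (occ_of u)|) ^+ 2 =
   Nsq f + Nsq g + (\sum_(u : cfg | total_is u) `|f (occ_of u)| * `|g (occ_of u)|) *+ 2.
  rewrite /Nsq -sumrMnl -!big_split /=; apply: eq_bigr => u _; ring.
by rewrite lerD2l lerMn2r /= cs.
Qed.


Lemma schur (X : finType) (a b : X -> occ n -> C) (g g' : X -> occ n -> occ n)
  (P Q : X -> pred (occ n)) (alpha beta : C) (psi : state C n) :
  (forall x u, 0 <= a x u) -> (forall x u, 0 <= b x u) ->
  (forall x u, ~~ P x u -> b x u = 0) ->
  (forall x u, tot u = l -> P x u -> tot (g x u) = l) ->
  (forall x v, tot v = l -> Q x v -> tot (g' x v) = l) ->
  (forall x u v, ((v == g x u) && P x u) = ((u == g' x v) && Q x v)) ->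
  (forall u, tot u = l -> \sum_x a x u ^+ 2 <= alpha) ->
  (forall v, tot v = l -> \sum_x (if Q x v then b x (g' x v) ^+ 2 else 0) <= beta) ->
  0 <= alpha ->
  Nsq (fun u => \sum_x a x u * b x u * psi (g x u)) <= alpha * beta * Nsq psi.
Proof.
move=> a0 b0 bP h1 h2 h3 hrow hcol al0.
pose T x u := b x u ^+ 2 * `|psi (g x u)| ^+ 2.
have st1 : Nsq (fun u => \sum_x a x u * b x u * psi (g x u)) <=
    \sum_(u : cfg | total_is u) alpha * \sum_x T x (occ_of u).
  apply: ler_sum => u tu.
  have t1 : `|\sum_x a x (occ_of u) * b x (occ_of u) * psi (g x (occ_of u))| <=
     \sum_x a x (occ_of u) * (b x (occ_of u) * `|psi (g x (occ_of u))|).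
    apply: (le_trans (ler_norm_sum _ _ _)); apply: ler_sum => x _.
    by rewrite !normrM (ger0_norm (a0 _ _)) (ger0_norm (b0 _ _)) mulrA.
  apply: (@le_trans _ _ ((\sum_x a x (occ_of u) * (b x (occ_of u) * `|psi (g x (occ_of u))|)) ^+ 2)).
    by rewrite !expr2; apply: ler_pM.
  apply: le_trans; first apply: cauchy_schwarz.
  - by move=> x; rewrite ger0_real.
  - by move=> x; rewrite ger0_real // mulr_ge0.
  apply: ler_pM.
  - by apply: sumr_ge0 => x _; rewrite exprn_ge0.
  - by apply: sumr_ge0 => x _; rewrite exprn_ge0 // mulr_ge0.
  - by apply: hrow; rewrite tot_occ_of.
  - by apply: ler_sum => x _; rewrite /T exprMn.
apply: (le_trans st1); rewrite -mulr_sumr -mulrA; apply: ler_wpM2l => //.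
rewrite exchange_big /=.
have st2 : forall x, \sum_(u : cfg | total_is u) T x (occ_of u) =
    \sum_(v : cfg | total_is v)
       (if Q x (occ_of v) then b x (g' x (occ_of v)) ^+ 2 * `|psi (occ_of v)| ^+ 2 else 0).
  move=> x.
  rewrite -(@sum_reindex (g x) (g' x) (P x) (Q x) (fun u v => b x u ^+ 2 * `|psi v| ^+ 2) (h1 x) (h2 x) (h3 x)).
  apply: eq_bigr => u _; rewrite /T; case: ifP => // /negbT /bP ->.
  by rewrite expr0n /= mul0r.
rewrite (eq_bigr _ (fun x _ => st2 x)) exchange_big /= /Nsq mulr_sumr.
apply: ler_sum => v tv.
rewrite (eq_bigr (fun x => (if Q x (occ_of v) then b x (g' x (occ_of v)) ^+ 2 else 0)
            * `|psi (occ_of v)| ^+ 2)); last by move=> x _; case: ifP; rewrite ?mul0r.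
rewrite -mulr_suml; apply: ler_wpM2r; first by rewrite exprn_ge0.
by apply: hcol; rewrite tot_occ_of.
Qed.

End Sums.
End Occ.

Section Bits.
Variable n : nat.
Lemma bxorK (x y : bits n) : bxor (bxor x y) y = x.
Proof. by apply/ffunP => i; rewrite !ffunE addbK. Qed.
Lemma bxor_inj (y : bits n) : injective (fun x : bits n => bxor x y).
Proof. by move=> a b h; rewrite -(bxorK a y) h bxorK. Qed.
Lemma bxor0l (y : bits n) : bxor (bzero n) y = y.
Proof. by apply/ffunP => i; rewrite !ffunE. Qed.
Lemma bxorxx (y : bits n) : bxor y y = bzero n.
Proof. by apply/ffunP => i; rewrite !ffunE addbb. Qed.
Lemma bxor_eq0 (x y : bits n) : (bxor x y == bzero n) = (x == y).
Proof.
apply/eqP/eqP => [h|->]; last by rewrite bxorxx.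
by rewrite -(bxorK x y) h bxor0l.
Qed.
Lemma bxor_neq (x y : bits n) : y != bzero n -> (bxor x y == x) = false.
Proof.
move=> hy; apply/eqP => h; move/negP: hy; apply; apply/eqP/ffunP => i.
by move/ffunP: h => /(_ i); rewrite !ffunE; case: (x i); case: (y i).
Qed.
Lemma bxor_eqy (x y : bits n) : (bxor x y == y) = (x == bzero n).
Proof.
apply/eqP/eqP => [h|->]; last by rewrite bxor0l.
by rewrite -(bxorK x y) h bxorxx.
Qed.

Lemma swap_ok (u v : occ n) (x z : bits n) : z != x ->
  ((v == occ_inc (occ_dec u z) x) && (0 < u z)%N) =
  ((u == occ_inc (occ_dec v x) z) && (0 < v x)%N).
Proof.
move=> zx; have xz : x != z by rewrite eq_sym.
apply/andP/andP => [[/eqP -> hz] | [/eqP -> hx]]; split.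
- apply/eqP/ffunP => t; rewrite !ffunE.
  case: (t =P z) => [->|/eqP tz]; first by rewrite ?eqxx ?(negbTE zx) /= addn0 subn0 subnK.
  by case: (t == x) => /=; rewrite ?subn0 ?addn0 ?addnK.
- by rewrite !ffunE eqxx (negbTE xz) /= addn1.
- apply/eqP/ffunP => t; rewrite !ffunE.
  case: (t =P x) => [->|/eqP tx]; first by rewrite ?eqxx ?(negbTE xz) /= addn0 subn0 subnK.
  by case: (t == z) => /=; rewrite ?subn0 ?addn0 ?addnK.
- by rewrite !ffunE eqxx (negbTE zx) /= addn1.
Qed.

Lemma le_tot2 (w : occ n) a b : a != b -> (w a + w b <= tot w)%N.
Proof.
move=> ab; rewrite /tot (bigD1 a) //= (bigD1 b) /=; last by rewrite eq_sym.
by rewrite addnA leq_addr.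
Qed.

Lemma sum_rest (w : occ n) (y : bits n) : y != bzero n ->
  (\sum_(x | (x != bzero n) && (x != y)) w (bxor x y) = tot w - w (bzero n) - w y)%N.
Proof.
move=> hy.
have e : tot w = (\sum_x w (bxor x y))%N.
  by rewrite /tot (reindex_inj (@bxor_inj y)).
have : (tot w = w y + w (bzero n) + \sum_(x | (x != bzero n) && (x != y)) w (bxor x y))%N.
  rewrite e (bigD1 (bzero n)) //= bxor0l (bigD1 y) /=; last done.
  by rewrite bxorxx addnA; congr (_ + _)%N; apply: eq_bigl => x; rewrite andbC.
lia.
Qed.

Lemma sum_rest2 (w : occ n) (y : bits n) : y != bzero n ->
  (\sum_(x | (x != bzero n) && (x != y)) w x <= tot w - w (bzero n))%N.
Proof.
move=> hy.
have : (tot w = w (bzero n) + \sum_(x | x != bzero n) w x)%N by rewrite /tot (bigD1 (bzero n)).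
have : (\sum_(x | (x != bzero n) && (x != y)) w x <= \sum_(x | x != bzero n) w x)%N.
  by rewrite [X in (_ <= X)%N](bigID (fun x => x != y)) /= leq_addr.
lia.
Qed.
End Bits.

Section G.
Variable C : numClosedFieldType.
Variables (n l : nat) (y : bits n) (r : nat).
Hypothesis hy : y != bzero n.

Local Notation z x := (bxor x y).
Local Notation o := (bzero n).
Definition gg (x : bits n) (u : occ n) := occ_inc (occ_dec u (z x)) x.
Definition gg' (x : bits n) (v : occ n) := occ_inc (occ_dec v x) (z x).
Definition ind (x : bits n) (u : occ n) : bool := (l - r <= gg x u o)%N.
Definition c0 (x : bits n) (u : occ n) : C :=
  sqrtC (u (z x))%:R * sqrtC ((occ_dec u (z x)) x).+1%:R * (ind x u)%:R.
Definition special (x : bits n) := (x == o) || (x == y).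
Definition aa x u : C := if special x then sqrtC (c0 x u)
  else sqrtC (u (z x))%:R * (ind x u)%:R.
Definition bb x u : C := if special x then sqrtC (c0 x u)
  else sqrtC ((occ_dec u (z x)) x).+1%:R * (ind x u)%:R * (0 < u (z x))%N%:R.

Lemma c0_ge0 x u : 0 <= c0 x u.
Proof. by rewrite /c0 !mulr_ge0 ?sqrtC_nat_ge0 ?ler0n. Qed.

Lemma aa_ge0 x u : 0 <= aa x u.
Proof. rewrite /aa; case: ifP => _; by rewrite ?sqrtC_ge0 ?c0_ge0 ?mulr_ge0 ?sqrtC_nat_ge0. Qed.
Lemma bb_ge0 x u : 0 <= bb x u.
Proof. rewrite /bb; case: ifP => _; by rewrite ?sqrtC_ge0 ?c0_ge0 ?mulr_ge0 ?sqrtC_nat_ge0. Qed.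

Lemma bool_sq (b : bool) : (b%:R : C) * b%:R = b%:R.
Proof. by case: b; rewrite ?mulr1 ?mulr0. Qed.

Lemma aabb x u : aa x u * bb x u = c0 x u.
Proof.
rewrite /aa /bb /c0; case: ifP => _; first exact: sqrtC_sq.
case: (posnP (u (z x))) => [->|h]; first by rewrite sqrtC0 !mul0r.
rewrite mulr1.
have -> : (sqrtC (u (z x))%:R * (ind x u)%:R *
   (sqrtC ((occ_dec u (z x)) x).+1%:R * (ind x u)%:R) : C) =
   sqrtC (u (z x))%:R * sqrtC ((occ_dec u (z x)) x).+1%:R * ((ind x u)%:R * (ind x u)%:R) by ring.
by rewrite bool_sq.
Qed.

Lemma Gt_Con_eq (psi : state C n) u :
  Gt l y (Con l r psi) u = (sqrtC l%:R)^-1 * \sum_x aa x u * bb x u * psi (gg x u).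
Proof.
rewrite /Gt; congr (_ * _); apply: eq_bigr => x _.
rewrite aabb /c0 /cre /ann /Con -/(gg x u) -/(ind x u).
by case: (ind x u); rewrite ?mulr1 ?mul1r ?mulr0 ?mul0r ?mulrA.
Qed.


Lemma sqrt2_le (p q P Q : nat) (b : bool) :
  (b -> [|| p == 0, q == 0 | (p <= P) && (q <= Q)])%N ->
  (sqrtC p%:R * sqrtC q%:R * b%:R : C) <= sqrtC P%:R * sqrtC Q%:R.
Proof.
case: b => /= [h|]; last by rewrite mulr0 mulr_ge0 ?sqrtC_nat_ge0.
rewrite mulr1; case/or3P: (h isT) => [/eqP ->|/eqP ->|/andP [hp hq]].
- by rewrite sqrtC0 mul0r mulr_ge0 ?sqrtC_nat_ge0.
- by rewrite sqrtC0 mulr0 mulr_ge0 ?sqrtC_nat_ge0.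
by apply: ler_pM; rewrite ?sqrtC_nat_ge0 ?sqrtC_nat_le.
Qed.

Lemma sqrt_bool_sq (m : nat) (b : bool) : (sqrtC m%:R * b%:R : C) ^+ 2 = (m * b)%:R.
Proof. by rewrite exprMn sqrtCK expr2 bool_sq natrM. Qed.

Definition kappa : C := sqrtC r.+1%:R + sqrtC r%:R + sqrtC r%:R.

Lemma o_y : (o == y) = false.
Proof. by apply/negbTE; rewrite eq_sym. Qed.
Lemma y_o : (y == o) = false.
Proof. exact/negbTE. Qed.

Lemma gen_facts x : x != o -> x != y ->
  [/\ (o == x) = false, (z x == x) = false, (x == z x) = false,
      (o == z x) = false & (z x == o) = false].
Proof.
move=> xo xy; have h1 : (z x == x) = false by exact: bxor_neq.
have h2 : (z x == o) = false by rewrite bxor_eq0; exact/negbTE.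
split => //; [by rewrite eq_sym; exact/negbTE | by rewrite eq_sym | by rewrite eq_sym].
Qed.

Lemma row_bound u : tot u = l ->
  \sum_x aa x u ^+ 2 <= sqrtC l%:R * kappa.
Proof.
move=> tu.
have t2 := le_tot2 u (negbT o_y).
rewrite (bigD1 o) //= (bigD1 y) //= /aa /special eqxx y_o eqxx orbT /=.
rewrite !sqrtCK.
have e1 : c0 o u <= sqrtC l%:R * sqrtC r.+1%:R.
  rewrite mulrC /c0 /ind /gg bxor0l !ffunE o_y eqxx /=.
  by apply: sqrt2_le => h; rewrite !subn0 in h *; lia.
have e2 : c0 y u <= sqrtC l%:R * sqrtC r%:R.
  rewrite /c0 /ind /gg bxorxx !ffunE o_y y_o eqxx /=.
  by apply: sqrt2_le => h; rewrite ?subn0 in h *; lia.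
have e3 : \sum_(i | (i != o) && (i != y))
     (if (i == o) || (i == y) then sqrtC (c0 i u) else sqrtC (u (z i))%:R * (ind i u)%:R) ^+ 2
   = ((\sum_(i | (i != o) && (i != y)) u (z i)) * (l - r <= u o))%N%:R.
  rewrite big_distrl /= natr_sum; apply: eq_bigr => x /andP [xo xy].
  rewrite (negbTE xo) (negbTE xy) /= sqrt_bool_sq /ind /gg.
  case: (gen_facts xo xy) => f1 f2 f3 f4 f5.
  by rewrite !ffunE f1 f4 /= subn0 addn0.
have e4 : (((\sum_(i | (i != o) && (i != y)) u (z i)) * (l - r <= u o))%N%:R : C)
     <= sqrtC l%:R * sqrtC r%:R.
  apply: sqrtC_nat_mul_le; rewrite sum_rest // tu; case: (leqP (l - r) (u o)) => h /=; rewrite ?muln1 ?muln0; lia.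
rewrite e3 /kappa.
have -> : sqrtC l%:R * (sqrtC r.+1%:R + sqrtC r%:R + sqrtC r%:R) =
   sqrtC l%:R * sqrtC r.+1%:R + (sqrtC l%:R * sqrtC r%:R + sqrtC l%:R * sqrtC r%:R) :> C by ring.
by rewrite lerD ?lerD.
Qed.


Lemma col_bound v : tot v = l ->
  \sum_x (if (0 < v x)%N then bb x (gg' x v) ^+ 2 else 0) <= sqrtC l%:R * kappa.
Proof.
move=> tv.
have t2 := le_tot2 v (negbT o_y).
have nn : 0 <= sqrtC l%:R * sqrtC r.+1%:R :> C by rewrite mulr_ge0 ?sqrtC_nat_ge0.
have nn' : 0 <= sqrtC l%:R * sqrtC r%:R :> C by rewrite mulr_ge0 ?sqrtC_nat_ge0.
rewrite (bigD1 o) //= (bigD1 y) //= /bb /special eqxx y_o eqxx orbT /=.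
have e1 : (if (0 < v o)%N then sqrtC (c0 o (gg' o v)) ^+ 2 else 0)
     <= sqrtC l%:R * sqrtC r.+1%:R.
  case: ifP => // h0; rewrite sqrtCK /c0 /ind /gg /gg' bxor0l !ffunE o_y y_o !eqxx /=.
  rewrite [X in _ <= X]mulrC.
  by apply: sqrt2_le => h; rewrite ?subn0 ?addn0 in h *; lia.
have e2 : (if (0 < v y)%N then sqrtC (c0 y (gg' y v)) ^+ 2 else 0)
     <= sqrtC l%:R * sqrtC r%:R.
  case: ifP => // h0; rewrite sqrtCK /c0 /ind /gg /gg' bxorxx !ffunE o_y y_o !eqxx /=.
  by apply: sqrt2_le => h; rewrite ?subn0 ?addn0 in h *; lia.
have e3 : \sum_(i | (i != o) && (i != y))
   (if (0 < v i)%N then (if (i == o) || (i == y) then sqrtC (c0 i (gg' i v)) else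
      sqrtC (occ_dec (gg' i v) (z i) i).+1%:R * (ind i (gg' i v))%:R *
      (0 < gg' i v (z i))%N%:R) ^+ 2 else 0)
   <= ((\sum_(i | (i != o) && (i != y)) v i) * (l - r <= v o))%N%:R.
  rewrite big_distrl /= natr_sum; apply: ler_sum => x /andP [xo xy].
  rewrite (negbTE xo) (negbTE xy) /=.
  case: (gen_facts xo xy) => f1 f2 f3 f4 f5.
  case: ifP => h0; last by rewrite ler0n.
  rewrite /ind /gg /gg' !ffunE !eqxx ?f1 ?f2 ?f3 ?f4 ?f5 /= !subn0 !addn0 addn1 /= mulr1 subn1 prednK //.
  by rewrite sqrt_bool_sq.
have e4 : (((\sum_(i | (i != o) && (i != y)) v i) * (l - r <= v o))%N%:R : C)
     <= sqrtC l%:R * sqrtC r%:R.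
  apply: sqrtC_nat_mul_le; have := sum_rest2 v hy; rewrite tv;
  case: (leqP (l - r) (v o)) => h /=; rewrite ?muln1 ?muln0; lia.
rewrite /kappa.
have -> : sqrtC l%:R * (sqrtC r.+1%:R + sqrtC r%:R + sqrtC r%:R) =
   sqrtC l%:R * sqrtC r.+1%:R + (sqrtC l%:R * sqrtC r%:R + sqrtC l%:R * sqrtC r%:R) :> C by ring.
by rewrite lerD ?lerD // (le_trans e3 e4).
Qed.


Lemma kappa_ge0 : 0 <= kappa.
Proof. by rewrite /kappa !addr_ge0 ?sqrtC_nat_ge0. Qed.

Lemma G_bound (hl : (0 < l)%N) (psi : state C n) :
  lnorm l (Gt l y (Con l r psi)) <= kappa * lnorm l psi.
Proof.
rewrite (@lnorm_ext _ _ _ _ (fun u => (sqrtC l%:R)^-1 * \sum_x aa x u * bb x u * psi (gg x u)));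
  last by move=> w _; rewrite Gt_Con_eq.
apply: lnorm_le_of_Nsq; first exact: kappa_ge0.
rewrite Nsq_scale.
have sl0 : sqrtC (l%:R : C) != 0 by rewrite sqrtC_eq0 pnatr_eq0 -lt0n.
have sl1 : 0 <= sqrtC (l%:R : C) by rewrite sqrtC_nat_ge0.
have H : Nsq l (fun u => \sum_x aa x u * bb x u * psi (gg x u)) <=
   (sqrtC l%:R * kappa) * (sqrtC l%:R * kappa) * Nsq l psi.
apply: (@schur n l C _ aa bb gg gg' (fun x u => 0 < u (z x))%N (fun x v => 0 < v x)%N
  (sqrtC l%:R * kappa) (sqrtC l%:R * kappa) psi aa_ge0 bb_ge0).
- move=> x u; rewrite -eqn0Ngt => /eqP hz; rewrite /bb; case: ifP => _.
    by rewrite /c0 hz sqrtC0 !mul0r sqrtC0.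
  by rewrite hz ltnn mulr0.
- move=> x u tu hz; rewrite /gg tot_inc tot_dec // tu prednK //.
- move=> x v tv hz; rewrite /gg' tot_inc tot_dec // tv prednK //.
- by move=> x u v; rewrite /gg /gg' swap_ok // bxor_neq.
- exact: row_bound.
- exact: col_bound.
- by rewrite mulr_ge0 ?sqrtC_nat_ge0 ?kappa_ge0.
apply: (le_trans (ler_wpM2l _ H)); first by rewrite exprn_ge0.
rewrite le_eqVlt; apply/orP; left; apply/eqP; rewrite normfV ger0_norm ?invr_ge0 //; field.
by [].
Qed.

End G.

Section H.
Variable C : numClosedFieldType.
Variables (n l : nat) (y : bits n).
Hypothesis hy : y != bzero n.
Local Notation z x := (bxor x y).
Local Notation o := (bzero n).

Lemma comm (x z' : bits n) (psi : state C n) w :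
  ann x (cre z' psi) w = cre z' (ann x psi) w + (if x == z' then psi w else 0).
Proof.
rewrite /ann /cre.
case: (x =P z') => [<-|/eqP xz].
  rewrite !ffunE eqxx addn1.
  have -> : occ_dec (occ_inc w x) x = w.
    by apply/ffunP => t; rewrite !ffunE; case: (t == x) => /=; rewrite ?addn0 ?subn0 ?addnK.
  case: (posnP (w x)) => [h|h].
    by rewrite h sqrtC0 mul0r add0r mulrA sqrtC_sq -natr1 mulr0n add0r mul1r.
  have -> : occ_inc (occ_dec w x) x = w.
    apply/ffunP => t; rewrite !ffunE; case: (t =P x) => [->|_] /=; last by rewrite subn0 addn0.
    by rewrite subn1 addn1 prednK.
  rewrite subn1 prednK // mulrA sqrtC_sq mulrA sqrtC_sq -natr1 mulrDl mul1r.
  by [].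
have zx : (z' == x) = false by rewrite eq_sym; exact/negbTE.
rewrite !ffunE; set b1 := (z' == x); set b2 := (x == z').
have -> : b1 = false by exact: zx.
have -> : b2 = false by exact: (negbTE xz).
rewrite addn0 subn0 addr0.
have -> : occ_dec (occ_inc w x) z' = occ_inc (occ_dec w z') x.
  apply/ffunP => t; rewrite !ffunE.
  case: (t =P x) => [ex|_]; case: (t =P z') => [ez|_] /=; rewrite ?subn0 ?addn0 //.
  by exfalso; move/eqP: xz; apply; rewrite -ex -ez.
by rewrite mulrCA.
Qed.


Lemma comm2 (zz x z' : bits n) (psi : state C n) u :
  cre zz (ann x (cre z' psi)) u =
  cre zz (cre z' (ann x psi)) u + (if x == z' then cre zz psi u else 0).
Proof.
rewrite {1}/cre comm mulrDr; congr (_ + _).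
by case: (x == z'); rewrite ?mulr0.
Qed.

Lemma lin (zz x : bits n) (c : C) (I : finType) (F : I -> state C n) u :
  cre zz (ann x (fun w => c * \sum_i F i w)) u = c * \sum_i cre zz (ann x (F i)) u.
Proof.
rewrite /cre /ann !mulr_sumr; apply: eq_bigr => i _; ring.
Qed.

Lemma cre_ann_diag (x : bits n) (psi : state C n) u :
  cre x (ann x psi) u = (u x)%:R * psi u.
Proof.
rewrite /cre /ann.
case: (posnP (u x)) => [h|h]; first by rewrite h sqrtC0 !mul0r.
have -> : occ_inc (occ_dec u x) x = u.
  apply/ffunP => t; rewrite !ffunE; case: (t =P x) => [->|_] /=; last by rewrite subn0 addn0.
  by rewrite subn1 addn1 prednK.
rewrite !ffunE.
have -> : (u x - (x == x)).+1 = u x.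
  by case: (x =P x) => // _ /=; rewrite subn1 prednK.
by rewrite mulrA sqrtC_sq.
Qed.

Lemma H_id (hl : (0 < l)%N) (phi : state C n) u : tot u = l ->
  Ht l y phi u = Gt l y (Gt l y phi) u - phi u.
Proof.
move=> tu.
have sl0 : sqrtC (l%:R : C) != 0 by rewrite sqrtC_eq0 pnatr_eq0 -lt0n.
have l0 : (l%:R : C) != 0 by rewrite pnatr_eq0 -lt0n.
have ss : (sqrtC l%:R)^-1 * (sqrtC l%:R)^-1 = (l%:R : C)^-1 by rewrite -invfM sqrtC_sq.
have E : Gt l y (Gt l y phi) u = (l%:R)^-1 *
   (\sum_x \sum_x' cre (z x) (cre (z x') (ann x (ann x' phi))) u +
    \sum_x \sum_x' (if x == z x' then cre (z x) (ann x' phi) u else 0)).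
  rewrite {1}/Gt -ss -mulrA; congr (_ * _).
  rewrite -big_split mulr_sumr; apply: eq_bigr => x _.
  rewrite lin -big_split; congr (_ * _); apply: eq_bigr => x' _.
  by rewrite comm2.
have D : \sum_x \sum_x' (if x == z x' then cre (z x) (ann x' phi) u else 0) = l%:R * phi u.
  rewrite exchange_big /=.
  rewrite (eq_bigr (fun x' => cre x' (ann x' phi) u)); last first.
    move=> x' _; rewrite (bigD1 (z x')) //= eqxx big1 ?addr0 ?bxorK //.
    by move=> x /negPf ->.
  rewrite (eq_bigr (fun x' => (u x')%:R * phi u)); last by move=> x' _; rewrite cre_ann_diag.
  by rewrite -mulr_suml -natr_sum -tu.
rewrite E D /Ht mulrDr mulrA mulVf // mul1r addrK.
by [].
Qed.

End H.

Section Arith.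
Variable C : numClosedFieldType.

Lemma sq_nat (m : nat) : sqrtC (m%:R : C) ^+ 2 = m%:R.
Proof. exact: sqrtCK. Qed.

Lemma sqr_real_ge0 (a : C) : a \is Num.real -> 0 <= a ^+ 2.
Proof. by rewrite realEsqr. Qed.

Lemma kappa_le (r : nat) : kappa C r <= sqrtC (r%:R : C) + sqrtC (2 + 4 * r%:R).
Proof.
rewrite /kappa -addrA [X in _ <= X]addrC addrA lerD2r.
set B := sqrtC (r.+1%:R : C); set D := sqrtC (r%:R : C).
have rB : B \is Num.real by rewrite sqrtC_real ?ler0n.
have rD : D \is Num.real by rewrite sqrtC_real ?ler0n.
apply: sqrt_le_of_sq; first by rewrite addr_ge0 ?sqrtC_nat_ge0.
  by rewrite addr_ge0 ?mulr_ge0 ?ler0n.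
rewrite -subr_ge0.
have -> : 2 + 4 * r%:R - (B + D) ^+ 2 =
  (B - D) ^+ 2 + 2 * (r%:R + 1 - B ^+ 2) + 2 * (r%:R - D ^+ 2) by ring.
have hB : B ^+ 2 = r%:R + 1 by rewrite /B sq_nat natr1.
have hD : D ^+ 2 = r%:R by rewrite /D sq_nat.
rewrite hB hD !subrr !mulr0 !addr0.
by apply: sqr_real_ge0; rewrite rpredB.
Qed.

Lemma kappa_prod (r : nat) : kappa C r.+1 * kappa C r + 1 <= 9 * r%:R + 9.
Proof.
rewrite /kappa.
set A := sqrtC (r.+2%:R : C); set B := sqrtC (r.+1%:R : C); set D := sqrtC (r%:R : C).
have rA : A \is Num.real by rewrite sqrtC_real ?ler0n.
have rB : B \is Num.real by rewrite sqrtC_real ?ler0n.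
have rD : D \is Num.real by rewrite sqrtC_real ?ler0n.
rewrite -subr_ge0.
rewrite -(@pmulr_lge0 _ 2) //.
have -> : (9 * r%:R + 9 - ((A + B + B) * (B + D + D) + 1)) * 2 =
  ((A - B) ^+ 2 + 2 * (A - D) ^+ 2 + 4 * (B - D) ^+ 2 + 1
   + 3 * (r%:R + 2 - A ^+ 2) + 9 * (r%:R + 1 - B ^+ 2) + 6 * (r%:R - D ^+ 2)).
  by ring.
have hA : A ^+ 2 = r%:R + 2 by rewrite /A sq_nat -!natr1; ring.
have hB : B ^+ 2 = r%:R + 1 by rewrite /B sq_nat natr1.
have hD : D ^+ 2 = r%:R by rewrite /D sq_nat.
rewrite hA hB hD !subrr !mulr0 !addr0.
have s1 := sqr_real_ge0 (rpredB rA rB).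
have s2 := sqr_real_ge0 (rpredB rA rD).
have s3 := sqr_real_ge0 (rpredB rB rD).
apply: addr_ge0; last exact: ler01.
apply: addr_ge0; last by rewrite mulr_ge0.
by apply: addr_ge0; last by rewrite mulr_ge0.
Qed.

End Arith.

Lemma Con_shift (C : numClosedFieldType) (n l : nat) (y : bits n) (r : nat) (psi : state C n) :
  Gt l y (Con l r psi) = Con l r.+1 (Gt l y (Con l r psi)).
Proof.
apply: functional_extensionality => v.
rewrite {2}/Con; case: ifP => // /negbT h.
rewrite Gt_Con_eq big1 ?mulr0 // => x _.
rewrite aabb /c0.
suff -> : ind l y r x v = false by rewrite mulr0 mul0r.
apply/negbTE; rewrite /ind -ltnNge.
have : (gg y x v (bzero n) <= (v (bzero n)).+1)%N.
  by rewrite /gg !ffunE -addn1 leq_add ?leq_subr ?leq_b1.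
rewrite -ltnNge in h; lia.
Qed.

Lemma Con_le (C : numClosedFieldType) (n l r : nat) (psi : state C n) :
  lnorm l (Con l r psi) <= lnorm l psi.
Proof.
rewrite -[X in _ <= X]mul1r; apply: lnorm_le_of_Nsq => //.
rewrite expr1n mul1r; apply: ler_sum => u _; rewrite /Con.
by case: ifP => _ //; rewrite normr0 expr0n /= exprn_ge0.
Qed.

Unset Implicit Arguments.

Theorem mainTheorem11 (C : numClosedFieldType) (n l : nat) (hl : (0 < l)%N)
    (y : bits n) (hy : y != bzero n) (r : nat) :
  opnorm_le l (fun psi : state C n => Gt l y (Con l r psi))
    (sqrtC (r%:R : C) + sqrtC (2 + 4 * r%:R)) /\
  opnorm_le l (fun psi : state C n => Ht l y (Con l r psi)) (9 * r%:R + 9).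
Proof.
split => psi.
  apply: (le_trans (G_bound r hy hl psi)).
  by apply: ler_wpM2r; [exact: lnorm_ge0 | exact: kappa_le].
have e : lnorm l (Ht l y (Con l r psi)) <=
   lnorm l (Gt l y (Gt l y (Con l r psi))) + lnorm l (Con l r psi).
  apply: lnorm_tri => w tw; rewrite (H_id y hl) //; exact: ler_normB.
apply: (le_trans e).
have e2 : lnorm l (Gt l y (Gt l y (Con l r psi))) <= kappa C r.+1 * (kappa C r * lnorm l psi).
  rewrite (Con_shift l y r psi).
  apply: (le_trans (G_bound r.+1 hy hl _)).
  apply: ler_wpM2l; first exact: kappa_ge0.
  exact: G_bound.
apply: (le_trans (lerD e2 (Con_le l r psi))).
rewrite mulrA -{2}(mul1r (lnorm l psi)) -mulrDl.
by apply: ler_wpM2r; [exact: lnorm_ge0 | exact: kappa_prod].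
Qed.
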